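(* Let $\rho^s$ be a qubit state on $H_2=\mathbb{C}^2$ and let $\rho=\rho^s\otimes|0\rangle\langle 0|$ be the two-qubit state on $H_2\otimes H_2$ obtained by adjoining an auxiliary qubit in state $|0\rangle$. Then there exists an incoherent operation $\Lambda$ on $H_2\otimes H_2$ such that $\Lambda(\rho)$ is Bell-nonlocal if and only if $\rho^s$ has non-vanishing coherence, i.e. $\rho^s_{01}=\langle 0|\rho^s|1\rangle\neq 0$.
   Context: Coherence is taken with respect to the fixed computational basis $\{|0\rangle,|1\rangle\}$ (and the product computational basis $\{|i\rangle|j\rangle\}$ on $H_2\otimes H_2$). A state is incoherent if it is diagonal in this basis; $\rho^s$ has non-vanishing coherence if it is not incoherent (equivalently its $l_1$-norm coherence $\mathcal{C}_{l_1}(\rho^s)=\sum_{i\neq j}|\rho^s_{ij}|$ is nonzero). An incoherent operation is a completely positive trace-preserving map $\Lambda(\rho)=\sum_j K_j\rho K_j^\dagger$ whose Kraus operators satisfy $K_j\mathcal{I}K_j^\dagger\subseteq\mathcal{I}$, where $\mathcal{I}$ is the set of incoherent states. A bipartite state is Bell-nonlocal if it violates some Bell inequality, i.e. its measurement statistics do not admit a local hidden variable model. *)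

(* Defs.v *)
From HB Require Import structures.
From mathcomp Require Import all_boot all_order all_algebra.
From mathcomp Require Import reals.
From mathcomp Require Export complex mxtens.
Set Implicit Arguments. Unset Strict Implicit. Unset Printing Implicit Defensive.
Import Order.TTheory GRing.Theory Num.Theory.
Local Open Scope ring_scope.

Section Quantum.
Variable R : realType.
Local Notation C := (R[i]).

Definition adjmx {m n} (A : 'M[C]_(m, n)) : 'M[C]_(n, m) :=
  (map_mx (fun z : C => z^*) A)^T.

Definition psd {n} (A : 'M[C]_n) : Prop :=
  adjmx A = A /\ forall v : 'cV[C]_n, 0 <= (adjmx v *m A *m v) 0 0.

Definition is_state {n} (rho : 'M[C]_n) : Prop := psd rho /\ \tr rho = 1.

Definition is_diag {n} (A : 'M[C]_n) : Prop :=
  forall i j : 'I_n, i != j -> A i j = 0.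

Definition incoherent_state {n} (rho : 'M[C]_n) : Prop :=
  is_state rho /\ is_diag rho.

Definition kraus_apply {n k} (K : 'I_k -> 'M[C]_n) (rho : 'M[C]_n) : 'M[C]_n :=
  \sum_(j < k) (K j *m rho *m adjmx (K j)).

(* incoherent operation: trace preserving Kraus family with
   K_j I K_j^dagger contained in (the cone of) incoherent states *)
Definition incoherent_op {n k} (K : 'I_k -> 'M[C]_n) : Prop :=
  \sum_(j < k) (adjmx (K j) *m K j) = 1%:M /\
  forall (j : 'I_k) (sigma : 'M[C]_n),
    incoherent_state sigma -> is_diag (K j *m sigma *m adjmx (K j)).

Definition povm {n m} (E : 'I_m -> 'M[C]_n) : Prop :=
  (forall a, psd (E a)) /\ \sum_(a < m) E a = 1%:M.

Definition lhv_model {nx ny na nb}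
    (p : 'I_nx -> 'I_ny -> 'I_na -> 'I_nb -> C) : Prop :=
  exists (L : nat) (q : 'I_L -> C)
         (PA : 'I_L -> 'I_nx -> 'I_na -> C) (PB : 'I_L -> 'I_ny -> 'I_nb -> C),
    (forall l, 0 <= q l) /\ \sum_(l < L) q l = 1 /\
    (forall l x a, 0 <= PA l x a) /\ (forall l x, \sum_(a < na) PA l x a = 1) /\
    (forall l y b, 0 <= PB l y b) /\ (forall l y, \sum_(b < nb) PB l y b = 1) /\
    forall x y a b, p x y a b = \sum_(l < L) q l * PA l x a * PB l y b.

Definition bell_nonlocal {dA dB} (rho : 'M[C]_(dA * dB)) : Prop :=
  exists (nx ny na nb : nat)
         (M : 'I_nx -> 'I_na -> 'M[C]_dA) (N : 'I_ny -> 'I_nb -> 'M[C]_dB),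
    (forall x, povm (M x)) /\ (forall y, povm (N y)) /\
    ~ lhv_model (fun x y a b => \tr ((M x a *t N y b) *m rho)).

Definition proj0 : 'M[C]_2 := delta_mx 0 0.

End Quantum.

(* Main.v *)
Require Import Defs.
From HB Require Import structures.
From mathcomp Require Import all_boot all_order all_algebra.
From mathcomp Require Import reals complex mxtens.
From mathcomp Require Import ring lra.
Import Order.TTheory GRing.Theory Num.Theory.
Local Open Scope ring_scope.
Section S.
Variable R : realType.
Local Notation C := R[i].

Lemma sum2 (V : nmodType) (F : 'I_2 -> V) : \sum_(i < 2) F i = F 0 + F 1.
Proof. rewrite big_ord_recl big_ord1; congr (_ + F _); exact: val_inj. Qed.

Lemma ord2 (i : 'I_2) : i = 0 \/ i = 1.
Proof. case: i => m Hi; case: m Hi => [|[|m]] Hi; [left|right|by []]; exact: val_inj. Qed.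

Lemma adjmxE m n (A : 'M[C]_(m,n)) i j : adjmx A i j = (A j i)^*.
Proof. by rewrite !mxE. Qed.

Lemma adjmxK m n (A : 'M[C]_(m,n)) : adjmx (adjmx A) = A.
Proof. by apply/matrixP => i j; rewrite !adjmxE conjCK. Qed.

Lemma adjmxM m n p (A : 'M[C]_(m,n)) (B : 'M[C]_(n,p)) :
  adjmx (A *m B) = adjmx B *m adjmx A.
Proof.
apply/matrixP => i j; rewrite adjmxE !mxE rmorph_sum; apply: eq_bigr => k _.
by rewrite !adjmxE rmorphM mulrC.
Qed.

Lemma adjmxD m n (A B : 'M[C]_(m,n)) : adjmx (A + B) = adjmx A + adjmx B.
Proof. by apply/matrixP => i j; rewrite !(adjmxE, mxE) rmorphD. Qed.

Lemma adjmxZ m n (c : C) (A : 'M[C]_(m,n)) : adjmx (c *: A) = c^* *: adjmx A.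
Proof. by apply/matrixP => i j; rewrite !(adjmxE, mxE) rmorphM. Qed.

Lemma qformE n (A : 'M[C]_n) (v : 'cV[C]_n) :
  (adjmx v *m A *m v) 0 0 = \sum_i \sum_j (v i 0)^* * A i j * v j 0.
Proof.
rewrite mxE [RHS]exchange_big; apply: eq_bigr => j _; rewrite mxE mulr_suml; apply: eq_bigr => i _.
by rewrite adjmxE.
Qed.

Lemma qform_delta n (A : 'M[C]_n) i :
  (adjmx (delta_mx i 0 : 'cV[C]_n) *m A *m (delta_mx i 0 : 'cV[C]_n)) 0 0 = A i i.
Proof.
rewrite qformE (bigD1 i) //= [X in _ + X]big1 => [|k nk]; last first.
  by rewrite big1 // => j _; rewrite mxE (negbTE nk) /= conjC0 !mul0r.
rewrite addr0 (bigD1 i) //= [X in _ + X]big1 => [|j nj]; last first.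
  by rewrite [delta_mx i 0 j 0]mxE (negbTE nj) /= mulr0.
by rewrite !mxE !eqxx /= conjC1 mul1r mulr1 !addr0.
Qed.

Lemma psd_diag n (A : 'M[C]_n) i : psd A -> 0 <= A i i.
Proof. by case=> _ /(_ (delta_mx i 0 : 'cV[C]_n)); rewrite qform_delta. Qed.

Lemma psd_delta n (k : 'I_n) : psd (delta_mx k k : 'M[C]_n).
Proof.
split.
  apply/matrixP => i j; rewrite adjmxE !mxE.
  by case: (j == k); case: (i == k); rewrite /= ?conjC1 ?conjC0.
move=> v; rewrite qformE (bigD1 k) //= [X in _ + X]big1 => [|i ni]; last first.
  by rewrite big1 // => j _; rewrite mxE (negbTE ni) /= mulr0 mul0r.
rewrite addr0 (bigD1 k) //= [X in _ + X]big1 => [|j nj]; last first.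
  by rewrite [delta_mx k k k j]mxE (negbTE nj) andbF /= mulr0 mul0r.
rewrite mxE !eqxx /= mulr1 !addr0 mulrC; exact: mul_conjC_ge0.
Qed.

Lemma psdD n (A B : 'M[C]_n) : psd A -> psd B -> psd (A + B).
Proof.
case=> hA qA [hB qB]; split; first by rewrite adjmxD hA hB.
move=> v; rewrite mulmxDr mulmxDl mxE; exact: addr_ge0.
Qed.

Lemma psd0 n : psd (0 : 'M[C]_n).
Proof.
split; first by apply/matrixP => i j; rewrite adjmxE !mxE conjC0.
by move=> v; rewrite mulmx0 mul0mx mxE.
Qed.

Lemma psdZ n (c : C) (A : 'M[C]_n) : 0 <= c -> psd A -> psd (c *: A).
Proof.
move=> c0 [hA qA]; split.
  by rewrite adjmxZ hA conj_Creal // ger0_real.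
move=> v; rewrite -scalemxAr -scalemxAl mxE; exact: mulr_ge0.
Qed.

Lemma psd_sum n k (F : 'I_k -> 'M[C]_n) : (forall j, psd (F j)) -> psd (\sum_j F j).
Proof.
move=> h; elim/big_ind: _ => //; [exact: psd0 | exact: psdD].
Qed.

Lemma psd_conj n (K A : 'M[C]_n) : psd A -> psd (K *m A *m adjmx K).
Proof.
case=> hA qA; split; first by rewrite !adjmxM adjmxK hA mulmxA.
move=> v; have := qA (adjmx K *m v).
by rewrite adjmxM adjmxK !mulmxA.
Qed.

Lemma psd_rank1 n (w : 'cV[C]_n) : psd (w *m adjmx w).
Proof.
split; first by rewrite adjmxM adjmxK.
move=> v; have e : adjmx w *m v = adjmx (adjmx v *m w) by rewrite adjmxM adjmxK.
rewrite mulmxA -mulmxA e.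
rewrite mxE big_ord1 adjmxE; exact: mul_conjC_ge0.
Qed.

End S.
Lemma e10 : ((1 : 'I_2) == 0) = false. Proof. by []. Qed.
Lemma e01 : ((0 : 'I_2) == 1) = false. Proof. by []. Qed.
Section S2.
Variable R : realType.
Local Notation C := R[i].
Local Notation ix := (@mxtens_index _ _).
Local Notation ux := (@mxtens_unindex _ _).

Lemma sum_tens m n (F : 'I_(m*n) -> C) :
  \sum_r F r = \sum_(i < m) \sum_(j < n) F (mxtens_index (i,j)).
Proof.
rewrite (reindex (@mxtens_index m n)) /=; last first.
  by exists (@mxtens_unindex m n) => x _; rewrite ?mxtens_indexK ?mxtens_unindexK.
rewrite pair_big /=; apply: eq_bigr => -[i j] _ //.
Qed.

Lemma tr_tens m n (A : 'M[C]_m) (B : 'M[C]_n) : \tr (A *t B) = \tr A * \tr B.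
Proof.
rewrite /mxtrace sum_tens mulr_suml; apply: eq_bigr => i _.
rewrite mulr_sumr; apply: eq_bigr => j _; by rewrite tensmxE.
Qed.

Lemma tr_delta n (k : 'I_n) : \tr (delta_mx k k : 'M[C]_n) = 1.
Proof.
rewrite /mxtrace (bigD1 k) //= big1 ?addr0 => [|i ni]; first by rewrite mxE eqxx.
by rewrite mxE (negbTE ni).
Qed.

Lemma tr_kraus n k (K : 'I_k -> 'M[C]_n) X :
  \sum_(j < k) (adjmx (K j) *m K j) = 1%:M -> \tr (kraus_apply K X) = \tr X.
Proof.
move=> h; rewrite /kraus_apply raddf_sum /=.
under eq_bigr do rewrite mxtrace_mulC mulmxA.
by rewrite -raddf_sum /= -mulmx_suml h mul1mx.
Qed.

Lemma is_diag_sum n k (F : 'I_k -> 'M[C]_n) : (forall j, is_diag (F j)) -> is_diag (\sum_j F j).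
Proof. by move=> h r s rs; rewrite summxE big1 // => j _; rewrite h. Qed.

Lemma is_diag_scale n c (A : 'M[C]_n) : is_diag A -> is_diag (c *: A).
Proof. by move=> h r s rs; rewrite mxE h // mulr0. Qed.

Lemma incoh_delta n (k : 'I_n) : incoherent_state (delta_mx k k : 'M[C]_n).
Proof.
split; first by split; [exact: psd_delta | exact: tr_delta].
move=> r s rs; rewrite mxE; case E: (r == k); last by [].
by move/eqP: E => E; subst k; rewrite eq_sym (negbTE rs).
Qed.

Definition sig0 (i : 'I_2) : 'M[C]_(2*2) := delta_mx (mxtens_index (i,0)) (mxtens_index (i,0)).

Lemma ixE m n (p q : 'I_m * 'I_n) : (mxtens_index p == mxtens_index q) = (p == q).
Proof. exact: (inj_eq (can_inj (@mxtens_indexK m n))). Qed.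

Lemma tens_proj0_diag (rhos : 'M[C]_2) : is_diag rhos ->
  rhos *t proj0 R = \sum_(i<2) rhos i i *: sig0 i.
Proof.
move=> hd; have h01 := hd 0 1 isT; have h10 := hd 1 0 isT; apply/matrixP => r s.
rewrite -[r]mxtens_unindexK -[s]mxtens_unindexK.
case: (mxtens_unindex r) => i j; case: (mxtens_unindex s) => k l.
rewrite tensmxE summxE sum2 !mxE !ixE.
by case: (ord2 i) => ->; case: (ord2 j) => ->; case: (ord2 k) => ->; case: (ord2 l) => ->;
rewrite !xpair_eqE !eqxx ?e10 ?e01 /= ?h01 ?h10 ?mulr0 ?mulr1 ?addr0 ?add0r.
Qed.
Lemma out_facts k (K : 'I_k -> 'M[C]_(2*2)) (rhos : 'M[C]_2) :
  incoherent_op K -> is_state rhos -> is_diag rhos ->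
  is_state (kraus_apply K (rhos *t proj0 R)) /\ is_diag (kraus_apply K (rhos *t proj0 R)).
Proof.
move=> [hK hinc] [hps htr] hd.
have c0 : forall i, 0 <= rhos i i by move=> i; exact: psd_diag.
rewrite tens_proj0_diag //.
split; last first.
  apply: is_diag_sum => j; rewrite mulmx_sumr mulmx_suml; apply: is_diag_sum => i.
  rewrite -scalemxAr -scalemxAl; apply: is_diag_scale; apply: hinc; exact: incoh_delta.
split.
  apply: psd_sum => j; apply: psd_conj; apply: psd_sum => i; apply: psdZ => //.
  exact: psd_delta.
rewrite tr_kraus // raddf_sum /= sum2 -htr.
by rewrite !mxtraceZ /sig0 !tr_delta !mulr1 [in RHS]/mxtrace sum2.
Qed.

Lemma diag_local dA dB (rho : 'M[C]_(dA*dB)) : is_state rho -> is_diag rho ->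
  ~ bell_nonlocal rho.
Proof.
move=> [hps htr] hd [nx [ny [na [nb [M [N [hM [hN nolhv]]]]]]]].
apply: nolhv.
exists (dA*dB), (fun l => rho l l),
  (fun l x a => M x a (mxtens_unindex l).1 (mxtens_unindex l).1),
  (fun l y b => N y b (mxtens_unindex l).2 (mxtens_unindex l).2).
split; first by move=> l; exact: psd_diag.
split; first by [].
split; first by move=> l x a; apply: psd_diag; exact: ((hM x).1 a).
split.
  move=> l x; rewrite -summxE (hM x).2 mxE eqxx //.
split; first by move=> l y b; apply: psd_diag; exact: ((hN y).1 b).
split.
  move=> l y; rewrite -summxE (hN y).2 mxE eqxx //.
move=> x y a b; rewrite /mxtrace; apply: eq_bigr => r _.
rewrite mxE (bigD1 r) //= big1 ?addr0 => [|t tr]; last by rewrite hd ?mulr0 // eq_sym.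
rewrite /tensmx mxE; ring.
Qed.

End S2.
Lemma o11 : (1 + 1 : 'I_2) = 0. Proof. exact: val_inj. Qed.
Lemma oii (i : 'I_2) : i + i = 0. Proof. by case: (ord2 i) => ->; [rewrite addr0 | exact: o11]. Qed.

Section S3.
Variable R : realType.
Local Notation C := R[i].

Definition cn (r : 'I_(2*2)) : 'I_(2*2) :=
  mxtens_index ((mxtens_unindex r).1, (mxtens_unindex r).2 + (mxtens_unindex r).1).

Lemma cnE i j : cn (mxtens_index (i, j)) = mxtens_index (i, j + i).
Proof. by rewrite /cn mxtens_indexK. Qed.

Lemma cnK : involutive cn.
Proof.
move=> r; rewrite -[r]mxtens_unindexK; case: (mxtens_unindex r) => i j.
by rewrite !cnE -addrA oii addr0.
Qed.

Lemma cn_eq r s : (r == cn s) = (cn r == s).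
Proof.
apply/eqP/eqP => [->|<-]; by rewrite cnK.
Qed.

Definition Kc : 'M[C]_(2*2) := \matrix_(r, s) ((r == cn s)%:R).

Lemma Kc_mull (X : 'M[C]_(2*2)) r s : (Kc *m X) r s = X (cn r) s.
Proof.
rewrite mxE (bigD1 (cn r)) //= big1 ?addr0 => [|t nt]; first by rewrite mxE cnK eqxx mul1r.
by rewrite mxE cn_eq eq_sym (negbTE nt) mul0r.
Qed.

Lemma adj_Kc : adjmx Kc = Kc.
Proof.
apply/matrixP => r s; rewrite adjmxE !mxE conjC_nat.
have -> : (s == cn r) = (r == cn s) by rewrite cn_eq eq_sym.
by [].
Qed.

Lemma Kc_mulr (X : 'M[C]_(2*2)) r s : (X *m Kc) r s = X r (cn s).
Proof.
rewrite mxE (bigD1 (cn s)) //= big1 ?addr0 => [|t nt]; first by rewrite mxE eqxx mulr1.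
by rewrite mxE (negbTE nt) mulr0.
Qed.

Lemma Kc_conj (X : 'M[C]_(2*2)) r s : (Kc *m X *m adjmx Kc) r s = X (cn r) (cn s).
Proof. by rewrite adj_Kc Kc_mulr Kc_mull. Qed.

Lemma Kc_incoh : incoherent_op (fun _ : 'I_1 => Kc).
Proof.
split.
  rewrite big_ord1 adj_Kc; apply/matrixP => r s; rewrite Kc_mull !mxE.
  by rewrite (inj_eq (can_inj cnK)).
move=> _ sigma [_ hd] r s rs; rewrite Kc_conj hd //.
by rewrite (inj_eq (can_inj cnK)).
Qed.

Lemma p_formula (rhos M N : 'M[C]_2) :
  \tr ((M *t N) *m kraus_apply (fun _ : 'I_1 => Kc) (rhos *t proj0 R)) =
  rhos 0 0 * M 0 0 * N 0 0 + rhos 0 1 * M 1 0 * N 1 0 +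
  rhos 1 0 * M 0 1 * N 0 1 + rhos 1 1 * M 1 1 * N 1 1.
Proof.
rewrite /kraus_apply big_ord1 /mxtrace sum_tens.
under eq_bigr do under eq_bigr do rewrite mxE sum_tens.
under eq_bigr do under eq_bigr do under eq_bigr do under eq_bigr do
  rewrite tensmxE Kc_conj !cnE tensmxE.
rewrite !sum2 /proj0 !mxE !addr0 !add0r !o11 !eqxx !e10 /=.
ring.
Qed.
End S3.
Section S4.
Variable R : realType.
Local Notation C := R[i].
Local Notation RC x := (real_complex R x).

Lemma ge0_C (z : C) : 0 <= z -> z = RC (complex.Re z).
Proof. by move=> h; rewrite [z in LHS]complexE (ger0_Im h) mulr0 addr0. Qed.

Lemma conjR (x : R) : (RC x)^* = RC x.
Proof. exact: conjc_real. Qed.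

Definition mx2 (p w w' r : C) : 'M[C]_2 :=
  \matrix_(i, j) if i == 0 then (if j == 0 then p else w) else (if j == 0 then w' else r).

Lemma mx2_00 p w w' r : mx2 p w w' r 0 0 = p. Proof. by rewrite mxE !eqxx. Qed.
Lemma mx2_01 p w w' r : mx2 p w w' r 0 1 = w. Proof. by rewrite mxE eqxx e10. Qed.
Lemma mx2_10 p w w' r : mx2 p w w' r 1 0 = w'. Proof. by rewrite mxE eqxx e10. Qed.
Lemma mx2_11 p w w' r : mx2 p w w' r 1 1 = r. Proof. by rewrite mxE e10. Qed.

Definition col2 (x y : C) : 'cV[C]_2 := \col_i (if i == 0 then x else y).

Lemma psd2 (p w r : C) : 0 < r -> 0 <= p - w * w^* / r -> psd (mx2 p w w^* r).
Proof.
move=> r0 h.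
have rr : r^* = r by apply: conj_Creal; apply: gtr0_real.
have rn0 : r != 0 by rewrite gt_eqF.
have -> : mx2 p w w^* r = r^-1 *: (col2 w r *m adjmx (col2 w r)) +
                          (p - w * w^* / r) *: delta_mx 0 0.
  apply/matrixP => i j; rewrite !mxE big_ord1 !mxE.
  case: (ord2 i) => ->; case: (ord2 j) => ->;
    rewrite ?eqxx ?e10 /= ?rr; by field.
apply: psdD; apply: psdZ => //.
- by rewrite invr_ge0 ltW.
- exact: psd_rank1.
- exact: psd_delta.
Qed.

Lemma psd2R (p w q : R) : 0 < q -> w * w <= p * q -> psd (mx2 (RC p) (RC w) (RC w) (RC q)).
Proof.
move=> q0 h; rewrite -{2}[RC w]conjR; apply: psd2; first by rewrite ltcR.
rewrite conjR -!rmorphM -fmorphV -rmorphM -rmorphB ler0c subr_ge0 ler_pdivrMr //.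
Qed.

End S4.
Arguments ge0_C {R z}.
Arguments mx2 {R}.
Arguments col2 {R}.
Lemma chsh (R:realType) (a0 a1 b0 b1: R): 0 <= a0 <= 1 -> 0 <= a1 <= 1 -> 0 <= b0 <= 1 -> 0 <= b1 <= 1 ->
  (2*a0-1)*(2*b0-1) + (2*a0-1)*(2*b1-1) + (2*a1-1)*(2*b0-1) - (2*a1-1)*(2*b1-1) <= 2.
Proof.
move=> /andP[? ?] /andP[? ?] /andP[? ?] /andP[? ?].
have u0 : 0 <= 1 - a0 by lra. have u1 : 0 <= 1 - a1 by lra.
have [h1|h1] := lerP 0 (b0 + b1 - 1); have [h2|h2] := lerP 0 (b0 - b1).
- have := mulr_ge0 u0 h1; have := mulr_ge0 u1 h2; nra.
- have h2' : 0 <= b1 - b0 by lra.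
  have := mulr_ge0 u0 h1.
  have : 0 <= a1 * (b1 - b0) by apply: mulr_ge0. nra.
- have h1' : 0 <= 1 - b0 - b1 by lra.
  have : 0 <= a0 * (1 - b0 - b1) by apply: mulr_ge0. have := mulr_ge0 u1 h2; nra.
- have h1' : 0 <= 1 - b0 - b1 by lra. have h2' : 0 <= b1 - b0 by lra.
  have : 0 <= a0 * (1 - b0 - b1) by apply: mulr_ge0.
  have : 0 <= a1 * (b1 - b0) by apply: mulr_ge0. nra.
Qed.

Section S5.
Variable R : realType.
Local Notation C := R[i].
Local Notation RC x := (real_complex R x).

Definition sg (x y a b : 'I_2) : C :=
  (if (x == 1) && (y == 1) then -1 else 1) * (if a == 0 then 1 else -1) *
  (if b == 0 then 1 else -1).

Definition chshS (p : 'I_2 -> 'I_2 -> 'I_2 -> 'I_2 -> C) : C :=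
  \sum_x \sum_y \sum_a \sum_b sg x y a b * p x y a b.

Lemma le1_of (u v : C) : 0 <= u -> 0 <= v -> u + v = 1 -> u <= 1.
Proof. by move=> hu hv <-; rewrite lerDl. Qed.

Lemma lhv_chsh p : lhv_model p -> chshS p <= 2.
Proof.
case=> L [q [PA [PB [hq [hs [hA [hA1 [hB [hB1 hp]]]]]]]]].
rewrite /chshS !sum2 !hp !mulr_sumr -!big_split /=.
apply: (@le_trans _ _ (\sum_l 2 * q l)); last by rewrite -mulr_sumr hs mulr1.
apply: ler_sum => l _.
have eA x : PA l x 1 = 1 - PA l x 0 by rewrite -(hA1 l x) sum2; ring.
have eB y : PB l y 1 = 1 - PB l y 0 by rewrite -(hB1 l y) sum2; ring.
rewrite !eA !eB /sg !eqxx ?e10 ?e01 /=.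
have bnd (P : 'I_2 -> C) : (forall a, 0 <= P a) -> \sum_(a < 2) P a = 1 ->
    0 <= complex.Re (P 0) <= 1.
  move=> hP s; have h0 := hP 0; have h1 := hP 1.
  rewrite sum2 (ge0_C h0) (ge0_C h1) -rmorphD -(rmorph1 (real_complex R)) in s.
  move/complexI: s => s.
  have g0 : 0 <= complex.Re (P 0) by rewrite -ler0c -ge0_C.
  have g1 : 0 <= complex.Re (P 1) by rewrite -ler0c -ge0_C.
  apply/andP; split; lra.
have bA x := bnd _ (hA l x) (hA1 l x).
have bB y := bnd _ (hB l y) (hB1 l y).
have := @chsh R _ _ _ _ (bA 0) (bA 1) (bB 0) (bB 1).
rewrite (ge0_C (hq l)) (ge0_C (hA l 0 0)) (ge0_C (hA l 1 0)) (ge0_C (hB l 0 0)) (ge0_C (hB l 1 0)).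
set q0 := complex.Re (q l).
set a0 := complex.Re (PA l 0 0). set a1 := complex.Re (PA l 1 0).
set b0 := complex.Re (PB l 0 0). set b1 := complex.Re (PB l 1 0).
move=> H; rewrite /= in H.
have hq0 : 0 <= q0 by rewrite -ler0c -ge0_C.
have H2 := ler_wpM2l hq0 H.
match goal with |- is_true (Order.le ?X _) =>
  have -> : X = RC (q0 * ((2*a0-1)*(2*b0-1) + (2*a0-1)*(2*b1-1) + (2*a1-1)*(2*b0-1) - (2*a1-1)*(2*b1-1)))
end.
  rewrite !(rmorphM, rmorphD, rmorphB, rmorph1, rmorphN, rmorph_nat) /=; ring.
have -> : 2 * RC q0 = RC (q0 * 2) by rewrite rmorphM rmorph_nat mulrC.
by rewrite lecR.
Qed.
End S5.
Section S6.
Variable R : realType.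
Local Notation C := R[i].
Local Notation RC x := (real_complex R x).

Definition Mm (c : C) (x a : 'I_2) : 'M[C]_2 :=
  if x == 0 then (if a == 0 then mx2 1 0 0 0 else mx2 0 0 0 1)
  else (if a == 0 then mx2 (1/2) (c/2) (c/2)^* (1/2)
        else mx2 (1/2) (-(c/2)) (-(c/2))^* (1/2)).

Definition Nm (rn : R) (y b : 'I_2) : 'M[C]_2 :=
  if y == 0 then
    (if b == 0 then mx2 (RC (1 - rn^+2/2)) (RC (rn/2)) (RC (rn/2)) (RC (rn^+2/2))
     else mx2 (RC (rn^+2/2)) (RC (-(rn/2))) (RC (-(rn/2))) (RC (1 - rn^+2/2)))
  else
    (if b == 0 then mx2 (RC (1 - rn^+2/2)) (RC (-(rn/2))) (RC (-(rn/2))) (RC (rn^+2/2))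
     else mx2 (RC (rn^+2/2)) (RC (rn/2)) (RC (rn/2)) (RC (1 - rn^+2/2))).

Lemma mx2_delta0 : mx2 1 0 0 0 = delta_mx 0 0 :> 'M[C]_2.
Proof.
apply/matrixP => i j; rewrite !mxE.
by case: (ord2 i) => ->; case: (ord2 j) => ->; rewrite ?eqxx ?e10.
Qed.

Lemma mx2_delta1 : mx2 0 0 0 1 = delta_mx 1 1 :> 'M[C]_2.
Proof.
apply/matrixP => i j; rewrite !mxE.
by case: (ord2 i) => ->; case: (ord2 j) => ->; rewrite ?eqxx ?e10 ?e01.
Qed.

Lemma conj_half (c : C) : (c / 2)^* = c^* / 2.
Proof. by rewrite rmorphM fmorphV rmorph_nat. Qed.

Lemma conj_halfN (c : C) : (- (c / 2))^* = - (c^* / 2).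
Proof. by rewrite -conj_half -rmorphN. Qed.

Lemma povm_M (c : C) : c * c^* <= 1 -> forall x, povm (Mm c x).
Proof.
move=> hn x; split.
  move=> a; rewrite /Mm; case: (ord2 x) => ->; case: (ord2 a) => ->;
    rewrite ?eqxx ?e10 /=.
  - rewrite mx2_delta0; exact: psd_delta.
  - rewrite mx2_delta1; exact: psd_delta.
  - apply: psd2; first by rewrite divr_gt0 ?ltr01 ?ltr0n.
    rewrite conj_half.
    have -> : 1 / 2 - c / 2 * (c^* / 2) / (1 / 2) = (1 - c * c^*) / 2 by field.
    by rewrite divr_ge0 ?ler0n // subr_ge0.
  - apply: psd2; first by rewrite divr_gt0 ?ltr01 ?ltr0n.
    rewrite conj_halfN.
    have -> : 1 / 2 - - (c / 2) * - (c^* / 2) / (1 / 2) = (1 - c * c^*) / 2 by field.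
    by rewrite divr_ge0 ?ler0n // subr_ge0.
rewrite sum2 /Mm; apply/matrixP => i j; rewrite !mxE.
case: (ord2 x) => ->; rewrite ?eqxx ?e10 /= !mxE;
  case: (ord2 i) => ->; case: (ord2 j) => ->; rewrite ?eqxx ?e10 ?e01 /= ?conj_halfN ?conj_half;
  by field.
Qed.

End S6.
Arguments Mm {R}.
Arguments Nm {R}.
Section S7.
Variable R : realType.
Local Notation C := R[i].
Local Notation RC x := (real_complex R x).

Lemma povm_N (rn : R) : 0 < rn -> rn <= 1 -> forall y, povm (Nm rn y).
Proof.
move=> r0 r1 y.
have s0 : 0 < rn ^+ 2 by rewrite exprn_gt0.
have s1 : rn ^+ 2 <= 1 by rewrite expr_le1 // ltW.
have s2 : 0 <= rn ^+ 2 * (1 - rn ^+ 2) by rewrite mulr_ge0 ?subr_ge0 // ltW.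
have s3 : rn * rn = rn ^+ 2 by rewrite expr2.
split.
  move=> b; rewrite /Nm; case: (ord2 y) => ->; case: (ord2 b) => ->;
    rewrite ?eqxx ?e10 /=; apply: psd2R; rewrite ?mulrN ?mulNr ?opprK -!s3; rewrite -!s3 in s0 s1 s2; nra.
rewrite sum2 /Nm; apply/matrixP => i j; rewrite !mxE.
case: (ord2 y) => ->; rewrite ?eqxx ?e10 /= !mxE;
  case: (ord2 i) => ->; case: (ord2 j) => ->; rewrite ?eqxx ?e10 ?e01 /= -rmorphD;
  by [rewrite -(rmorph1 (real_complex R)); congr (real_complex R _); ring
     | rewrite -(rmorph0 (real_complex R)); congr (real_complex R _); ring].
Qed.

End S7.
Section S8a.
Variable R : realType.
Local Notation C := R[i].
Local Notation RC x := (real_complex R x).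

Definition pf (r : 'M[C]_2) (M N : 'I_2 -> 'I_2 -> 'M[C]_2) (x y a b : 'I_2) : C :=
  r 0 0 * M x a 0 0 * N y b 0 0 + r 0 1 * M x a 1 0 * N y b 1 0 +
  r 1 0 * M x a 0 1 * N y b 0 1 + r 1 1 * M x a 1 1 * N y b 1 1.

Lemma chsh_pf (rhos : 'M[C]_2) (M N : 'I_2 -> 'I_2 -> 'M[C]_2) :
  chshS R (fun x y a b => \tr ((M x a *t N y b) *m kraus_apply (fun _ : 'I_1 => Kc R) (rhos *t proj0 R)))
  = chshS R (pf rhos M N).
Proof.
apply: eq_bigr => x _; apply: eq_bigr => y _; apply: eq_bigr => a _; apply: eq_bigr => b _.
by rewrite p_formula.
Qed.

Lemma chsh_val (rhos : 'M[C]_2) (c : C) (rn : R) :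
  rhos 0 1 = c -> rhos 1 0 = c^* -> rhos 1 1 = 1 - rhos 0 0 ->
  chshS R (pf rhos (Mm c) (Nm rn)) = 2 * (1 - RC rn ^+ 2) + 4 * RC rn * (c * c^*).
Proof.
move=> h01 h10 hb.
have eP : RC (1 - rn^+2/2) = 1 - RC rn ^+ 2 / 2.
  by rewrite rmorphB rmorph1 rmorphM rmorphXn fmorphV rmorph_nat.
have eQ : RC (rn^+2/2) = RC rn ^+ 2 / 2.
  by rewrite rmorphM rmorphXn fmorphV rmorph_nat.
have eW : RC (rn/2) = RC rn / 2.
  by rewrite rmorphM fmorphV rmorph_nat.
have eW' : RC (-(rn/2)) = - (RC rn / 2).
  by rewrite rmorphN rmorphM fmorphV rmorph_nat.
rewrite /chshS !sum2 /pf /Mm /Nm /sg !eqxx ?e10 ?e01 /=.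
rewrite !mx2_00 !mx2_01 !mx2_10 !mx2_11 ?conj_half ?conj_halfN h01 h10 hb eP eQ eW eW'.
by field.
Qed.
End S8a.
Section S8.
Variable R : realType.
Local Notation C := R[i].
Local Notation RC x := (real_complex R x).

Lemma coherent_nonlocal (rhos : 'M[C]_2) : is_state rhos -> ~ is_diag rhos ->
  bell_nonlocal (dA := 2) (dB := 2) (kraus_apply (fun _ : 'I_1 => Kc R) (rhos *t proj0 R)).
Proof.
move=> [[hH hq] htr] nd.
have h10 : rhos 1 0 = (rhos 0 1)^*.
  have := congr1 (fun A : 'M[C]_2 => A 0 1) hH; rewrite /= adjmxE => <-.
  by rewrite conjCK.
set c := rhos 0 1.
have c0 : c != 0.
  apply/negP => /eqP c0; apply: nd => i j ij.
  move: ij; case: (ord2 i) => ->; case: (ord2 j) => -> //; rewrite ?h10 -/c c0 ?conjC0 //.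
set n := c * c^*.
have n0 : 0 <= n := mul_conjC_ge0 c.
set rn := complex.Re n.
have hn : n = RC rn := ge0_C n0.
have rn0 : 0 < rn.
  rewrite lt_def -ler0c -hn n0 andbT; apply/negP => /eqP r0.
  by move: c0; rewrite -mul_conjC_eq0 -/n hn r0 rmorph0 eqxx.
have hb : rhos 1 1 = 1 - rhos 0 0 by rewrite -htr /mxtrace sum2; ring.
have ha0 : 0 <= rhos 0 0 by exact: psd_diag.
have hb0 : 0 <= rhos 1 1 by exact: psd_diag.
set ra := complex.Re (rhos 0 0).
have hra : rhos 0 0 = RC ra := ge0_C ha0.
have rn1 : rn <= 1.
  have := hq (col2 c (-1)); rewrite qformE !sum2 !mxE ?eqxx ?e10 /= h10 hb -/c rmorphN1.
  have -> : c^* * rhos 0 0 * c + c^* * c * -1 + (-1 * c^* * c + -1 * (1 - rhos 0 0) * -1)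
      = rhos 0 0 * (c * c^*) + (1 - rhos 0 0) - 2 * (c * c^*) by ring.
  rewrite -/n hn hra.
  have -> : RC ra * RC rn + (1 - RC ra) - 2 * RC rn = RC (ra * rn + (1 - ra) - 2 * rn).
    by rewrite !(rmorphD, rmorphB, rmorphN, rmorphM, rmorph1, rmorph_nat).
  rewrite ler0c => h.
  have g0 : 0 <= ra by rewrite -ler0c -hra.
  have g1 : 0 <= 1 - ra.
    have e : 1 - RC ra = RC (1 - ra) by rewrite rmorphB rmorph1.
    by move: hb0; rewrite hb hra e ler0c.
  nra.
exists 2, 2, 2, 2, (Mm c), (Nm rn).
split.
  apply: povm_M; rewrite -/n hn.
  have -> : (1 : C) = RC 1 by rewrite rmorph1.
  by rewrite lecR.
split; first exact: povm_N.
move/lhv_chsh; rewrite chsh_pf (@chsh_val R rhos c rn) // -/n hn.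
have -> : 2 * (1 - RC rn ^+ 2) + 4 * RC rn * RC rn = 2 + 2 * RC rn ^+ 2 by ring.
have e1 : RC (2 + 2 * rn ^+ 2) = 2 + 2 * RC rn ^+ 2.
  by rewrite rmorphD rmorphM rmorphXn rmorph_nat.
have e2 : RC 2 = 2 by rewrite rmorph_nat.
rewrite -e1 -e2 lecR => h.
have : 0 < rn ^+ 2 by rewrite exprn_gt0.
lra.
Qed.
End S8.

Theorem theorem1 (R : realType) (rhos : 'M[R[i]]_2) :
  is_state rhos ->
  ((exists (k : nat) (K : 'I_k -> 'M[R[i]]_(2 * 2)),
      incoherent_op K /\ bell_nonlocal (dA := 2) (dB := 2) (kraus_apply K (rhos *t proj0 R)))
   <-> ~ is_diag rhos).
Proof.
move=> hs; split.
- case=> k [K [hK hnl]] hd.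
  have [hst hdo] := @out_facts R k K rhos hK hs hd.
  exact: (@diag_local R 2 2 _ hst hdo hnl).
- move=> nd; exists 1, (fun _ => Kc R); split.
  + exact: Kc_incoh.
  + exact: coherent_nonlocal.
Qed.
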